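(* Let $X$ be a $T_1$ space and $T\subset X$ such that (a) for every $x\in X-T$ there is a clopen subset $W$ of $X$ with $x\in W$ and $W\cap T=\emptyset$, and (b) $X-T$ is totally disconnected. Let $\mathcal{C}\subset\mathcal{K}(X)$ be connected. Then for all $Y_1,Y_2\in\mathcal{C}$, $Y_1-T=Y_2-T$.
   Context: $\mathcal{K}(X)$ is the set of nonempty compact subsets of $X$ with the Vietoris topology (generated by $U^+=\{A: A\subset U\}$ and $U^-=\{A: A\cap U\neq\emptyset\}$ for $U$ open in $X$). A space is totally disconnected if any two distinct points can be separated by a clopen set containing one but not the other. *)

(* Defs.v *)
From HB Require Import structures.
From mathcomp Require Import all_boot all_order all_algebra.
From mathcomp Require Import all_classical all_reals all_analysis.
Set Implicit Arguments. Unset Strict Implicit. Unset Printing Implicit Defensive.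
Local Open Scope classical_set_scope.

(* The Vietoris topology on the power set of X: carrier (set X), generated by
   the subbase  U^+ = [set A | A `<=` U]  and  U^- = [set A | A `&` U !=set0]
   for U open in X.  The hyperspace K(X) of nonempty compact subsets is then
   the subset [set A | A !=set0 /\ compact A] of this space, with the subspace
   topology (which is exactly the Vietoris topology of K(X), since the
   subbase restricts to the subbase). *)
Definition vietoris (X : topologicalType) : Type := set X.

Section Vietoris.
Context (X : topologicalType).
HB.instance Definition _ := Choice.on (vietoris X).
HB.instance Definition _ := Pointed.on (vietoris X).

Definition vietoris_subbase_index : set (set X * bool) :=
  [set p | open p.1].
Definition vietoris_subbase (p : set X * bool) : set (vietoris X) :=
  if p.2 then [set A : vietoris X | A `<=` p.1]
  else [set A : vietoris X | A `&` p.1 !=set0].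

HB.instance Definition _ := @isSubBaseTopological.Build (vietoris X)
  (set X * bool)%type vietoris_subbase_index vietoris_subbase.
End Vietoris.

Definition hyperspace (X : topologicalType) : set (vietoris X) :=
  [set A : vietoris X | (A : set X) !=set0 /\ compact (A : set X)].
Arguments hyperspace : clear implicits.

Definition rel_clopen (X : topologicalType) (S B : set X) :=
  (exists2 U, open U & B = S `&` U) /\ (exists2 F, closed F & B = S `&` F).

Definition totally_disconnected_sep (X : topologicalType) (S : set X) :=
  forall x y, S x -> S y -> x <> y ->
    exists B, [/\ rel_clopen S B, B x & ~ B y].

(* Main.v *)
Require Import Defs.
From HB Require Import structures.
From mathcomp Require Import all_boot all_order all_algebra.
From mathcomp Require Import all_classical all_reals all_analysis.
From mathcomp Require Import finmap.
Local Open Scope classical_set_scope.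


Lemma vsub_open (X : topologicalType) (p : set X * bool) : open p.1 ->
  open (vietoris_subbase p : set (vietoris X)).
Proof.
move=> op.
exists [set vietoris_subbase p]; last by rewrite bigcup_set1.
move=> _ ->; exists [fset p]%fset.
  by move=> q /=; rewrite inE => /eqP ->; rewrite in_setE.
by rewrite set_fset1 bigcap_set1.
Qed.

Section PT.
Context (X : topologicalType) (x0 : X).
Definition ptX : Type := X.
HB.instance Definition _ := Topological.on ptX.
HB.instance Definition _ := isPointed.Build ptX x0.
Lemma compact_cover_X (A : set X) : compact A -> cover_compact A.
Proof. move=> cA; have : @compact ptX A by []. by rewrite compact_cover. Qed.
End PT.

Lemma big_setI_mem (X : eqType) (Y : Type) (s : seq X) (g : X -> set Y) z :
  (\big[setI/setT]_(i <- s) g i) z <-> (forall i, i \in s -> g i z).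
Proof.
elim: s => [|a s IH]; first by rewrite big_nil.
rewrite big_cons; split.
  move=> [ga /IH H] i; rewrite inE => /orP[/eqP ->//|]; exact: H.
move=> H; split; first by apply: H; rewrite inE eqxx.
by apply/IH => i ins; apply: H; rewrite inE ins orbT.
Qed.

Lemma big_setI_clopen (X : eqType) (Y : topologicalType) (s : seq X) (g : X -> set Y) :
  (forall i, i \in s -> clopen (g i)) -> clopen (\big[setI/setT]_(i <- s) g i).
Proof.
elim: s => [|a s IH] H; first by rewrite big_nil; split; [exact: openT|exact: closedT].
rewrite big_cons; apply: clopenI; first by apply: H; rewrite inE eqxx.
by apply: IH => i ins; apply: H; rewrite inE ins orbT.
Qed.

Lemma sep (X : topologicalType) (T : set X)
  (ha : forall x, (~` T) x -> exists W : set X, [/\ clopen W, W x & W `&` T = set0])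
  (hb : totally_disconnected_sep (~` T)) x y :
  ~ T x -> x <> y -> exists D : set X, [/\ clopen D, D x & ~ D y].
Proof.
move=> Tx xy; have [W [[oW cW] Wx WT]] := ha x Tx.
have WnT z : W z -> ~ T z by move=> Wz Tz; have : (W `&` T) z by []; rewrite WT.
have [Ty|Ty] := pselect (T y).
  by exists W; split => // /WnT.
have [B [[[U oU BU] [F cF BF]] Bx By]] := hb x y Tx Ty xy.
exists (W `&` B); split => //; last by case.
split.
  suff -> : W `&` B = W `&` U by exact: openI.
  rewrite BU; apply/seteqP; split => z /=; first by case=> ? [].
  by case=> Wz Uz; split => //; split => //; exact: WnT.
suff -> : W `&` B = W `&` F by exact: closedI.
rewrite BF; apply/seteqP; split => z /=; first by case=> ? [].
by case=> Wz Uz; split => //; split => //; exact: WnT.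
Qed.

Lemma key (X : topologicalType) (T : set X)
  (ha : forall x, (~` T) x -> exists W : set X, [/\ clopen W, W x & W `&` T = set0])
  (hb : totally_disconnected_sep (~` T))
  (C : set (vietoris X)) (hCK : C `<=` hyperspace X) (hC : connected C)
  (Y1 Y2 : vietoris X) : C Y1 -> C Y2 -> forall x, Y1 x -> ~ T x -> Y2 x.
Proof.
move=> CY1 CY2 x Y1x Tx; apply: contrapT => Y2x.
have : forall y, exists D : set X, Y2 y -> [/\ clopen D, D x & ~ D y].
  move=> y; have [Y2y|Y2y] := pselect (Y2 y); last by exists setT.
  have [D HD] := @sep X T ha hb x y Tx (fun e => Y2x (eq_ind_r Y2 Y2y e)).
  by exists D.
move=> /choice [g Hg].
have cY2 : compact (Y2 : set X) by have [] := hCK _ CY2.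
move: cY2 => /(@compact_cover_X X x) => /(_ X Y2 (fun y => ~` g y)).
case.
- by move=> y Y2y; rewrite openC; have [[]] := Hg y Y2y.
- move=> y Y2y; exists y => //; by have [] := Hg y Y2y.
move=> D' sD' cov.
pose W := \big[setI/setT]_(i <- D') g i.
have D'Y2 i : i \in D' -> Y2 i by move=> /sD'; rewrite in_setE.
have cW : clopen W by apply: big_setI_clopen => i /D'Y2 /Hg [].
have Wx : W x by apply/big_setI_mem => i /D'Y2 /Hg [].
have WY2 z : Y2 z -> ~ W z.
  move=> /cov [i /= D'i giz] /big_setI_mem H; exact: giz (H i D'i).
pose B := C `&` (vietoris_subbase (W, false) : set (vietoris X)).
have BC : B = C.
  apply: hC.
  - by exists Y1; split => //; exists x.
  - by exists (vietoris_subbase (W, false)) => //; apply: vsub_open; case: cW.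
  exists (~` (vietoris_subbase (~` W, true) : set (vietoris X))).
    by rewrite closedC; apply: vsub_open; rewrite /= openC; case: cW.
  rewrite /B; congr (_ `&` _); apply/seteqP; split => A /=.
    by case=> z [Az Wz] H; exact: H z Az Wz.
  move=> H; apply: contrapT => H2; apply: H => z Az Wz; apply: H2; by exists z.
have : B Y2 by rewrite BC.
by case=> _ [z [Y2z Wz]]; exact: WY2 Y2z Wz.
Qed.

Theorem lemma5p3 (X : topologicalType) (T : set X)
  (hT1 : accessible_space X)
  (ha : forall x, (~` T) x -> exists W : set X, [/\ clopen W, W x & W `&` T = set0])
  (hb : totally_disconnected_sep (~` T))
  (C : set (vietoris X)) (hCK : C `<=` hyperspace X) (hC : connected C) :
  forall Y1 Y2 : vietoris X, C Y1 -> C Y2 -> (Y1 : set X) `\` T = (Y2 : set X) `\` T.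
Proof.
move=> Y1 Y2 C1 C2; apply/seteqP; split => z [Yz Tz]; split => //.
- exact: (@key X T ha hb C hCK hC _ _ C1 C2).
- exact: (@key X T ha hb C hCK hC _ _ C2 C1).
Qed.
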